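(* Let $p>1$, $p'=\frac{p}{p-1}$, and let $b\in C^1([0,\infty))$ satisfy $b(t)>0$ for $t\ge0$ and $\limsup_{t\to\infty}\frac{|b'(t)|}{b(t)^2}<1$. Let $\Phi(t)=\int_t^\infty\exp(-\int_t^sb(\sigma)d\sigma)\,ds$. Let $\eta\in C^2([0,\infty))$ satisfy $\eta=1$ on $[0,1/2]$, $\eta$ decreasing on $(1/2,1)$, $\eta=0$ on $[1,\infty)$, and let $\eta^*(s)=0$ for $s\in[0,1/2)$, $\eta^*(s)=\eta(s)$ for $s\ge 1/2$. For $R>0$ set $$s_R(x,t)=R^{-1}\Big(1+|x|^2+\int_0^t\Phi(\sigma)\,d\sigma\Big),\quad \psi_R=[\eta(s_R)]^{2p'},\quad \psi_R^*=[\eta^*(s_R)]^{2p'},$$ on $\mathbb{R}^N\times[0,\infty)$, and $P(R)=\{(x,t)\in\mathbb{R}^N\times[0,\infty): 1+|x|^2+\int_0^t\Phi(\sigma)d\sigma\le R\}$. Then: (i) $\psi_R(x,t)=1$ for $(x,t)\in P(R/2)$ and $\psi_R(x,t)=0$ for $(x,t)\notin P(R)$; (ii) there is $C_1>0$ such that $|\partial_t\psi_R(x,t)|\le C_1R^{-1}\Phi(t)[\psi_R^*(x,t)]^{1/p}$ for all $R>0$ and $(x,t)\in P(R)$; (iii) there is $C_2>0$ such that $|\Delta\psi_R(x,t)|\le C_2R^{-1}[\psi_R^*(x,t)]^{1/p}$ for all $R>0$ and $(x,t)\in P(R)$; (iv) if in addition $1/b\notin L^1(0,\infty)$, there is $C_3>0$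 such that $|\partial_t^2\psi_R(x,t)|\le C_3R^{-1}[\psi_R^*(x,t)]^{1/p}$ for all $R>0$ and $(x,t)\in P(R)$. *)

(* Defs.v *)
From Stdlib Require Import Reals.
From Coquelicot Require Import Coquelicot.
Open Scope R_scope.

(* Points of R^N are represented by x : nat -> R, of which only the
   coordinates 0..N-1 are used. *)
Fixpoint normsq (N : nat) (x : nat -> R) : R :=
  match N with
  | O => 0
  | S n => normsq n x + (x n) ^ 2
  end.

Fixpoint sumN (N : nat) (f : nat -> R) : R :=
  match N with
  | O => 0
  | S n => sumN n f + f n
  end.

Definition upd (x : nat -> R) (i : nat) (h : R) : nat -> R :=
  fun j => if Nat.eqb j i then h else x j.

Definition laplacian (N : nat) (u : (nat -> R) -> R) (x : nat -> R) : R :=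
  sumN N (fun i => Derive (fun h => Derive (fun h' => u (upd x i h')) h) (x i)).

(* real power y^q for y > 0, with the convention 0^q = 0 (q > 0) *)
Definition rpow (y q : R) : R := if Rle_dec y 0 then 0 else Rpower y q.

Definition Phi (b : R -> R) (t : R) : R :=
  RInt_gen (fun s => exp (- RInt b t s)) (at_point t) (Rbar_locally p_infty).

Definition rho (b : R -> R) (N : nat) (x : nat -> R) (t : R) : R :=
  1 + normsq N x + RInt (Phi b) 0 t.

Definition sR (b : R -> R) (N : nat) (R0 : R) (x : nat -> R) (t : R) : R :=
  / R0 * rho b N x t.

Definition etaStar (eta : R -> R) (s : R) : R :=
  if Rlt_dec s (1/2) then 0 else eta s.

Definition conj_exp (p : R) : R := p / (p - 1).

Definition psiR (b eta : R -> R) (p : R) (N : nat) (R0 : R)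
  (x : nat -> R) (t : R) : R :=
  rpow (eta (sR b N R0 x t)) (2 * conj_exp p).

Definition psiRstar (b eta : R -> R) (p : R) (N : nat) (R0 : R)
  (x : nat -> R) (t : R) : R :=
  rpow (etaStar eta (sR b N R0 x t)) (2 * conj_exp p).

Definition inP (b : R -> R) (N : nat) (R0 : R) (x : nat -> R) (t : R) : Prop :=
  0 <= t /\ rho b N x t <= R0.

(* Main.v *)
Require Import Defs.
From Stdlib Require Import Reals.
From Coquelicot Require Import Coquelicot.
From Stdlib Require Import Lra Lia.
Open Scope R_scope.

Lemma Derive_right_ext (f g : R -> R) t :
  (forall y, t <= y -> f y = g y) -> Derive f t = Derive g t.
Proof.
  intros H. unfold Derive, Lim. f_equal. apply Lim_seq_ext. intros n. simpl.
  assert (0 < / (INR n + 1)) by (apply Rinv_0_lt_compat; pose proof (pos_INR n); lra).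
  rewrite !H; lra.
Qed.

Lemma rpow_pos_eq y a : 0 < y -> rpow y a = Rpower y a.
Proof. intros. unfold rpow. destruct (Rle_dec y 0); lra. Qed.

Lemma rpow_nonpos y a : y <= 0 -> rpow y a = 0.
Proof. intros. unfold rpow. destruct (Rle_dec y 0); lra. Qed.

Lemma rpow_ge0 y a : 0 <= rpow y a.
Proof. unfold rpow. destruct (Rle_dec y 0). lra. unfold Rpower. left; apply exp_pos. Qed.

Lemma rpow_1 a : rpow 1 a = 1.
Proof. rewrite rpow_pos_eq by lra. unfold Rpower. rewrite ln_1, Rmult_0_r, exp_0. reflexivity. Qed.

Lemma rpow_0 a : rpow 0 a = 0.
Proof. apply rpow_nonpos; lra. Qed.

Lemma rpow_split y a : 0 <= y -> rpow y a = y * rpow y (a - 1).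
Proof.
  intros [Hy|Hy].
  - rewrite !rpow_pos_eq by lra.
    replace a with ((a-1) + 1) at 1 by ring. rewrite Rpower_plus, Rpower_1 by lra. ring.
  - subst. rewrite !rpow_0. ring.
Qed.

Lemma rpow_rpow y a c : rpow (rpow y a) c = rpow y (a * c).
Proof.
  destruct (Rle_dec y 0).
  - rewrite (rpow_nonpos y) by lra. rewrite rpow_0, rpow_nonpos by lra. reflexivity.
  - rewrite !(rpow_pos_eq y) by lra. rewrite rpow_pos_eq by (unfold Rpower; apply exp_pos).
    apply Rpower_mult.
Qed.

Lemma rpow_derive a y : 1 < a -> is_derive (fun y => rpow y a) y (a * rpow y (a-1)).
Proof.
  intros Ha. destruct (Rlt_le_dec 0 y) as [Hy|Hy].
  - apply is_derive_ext_loc with (fun z => Rpower z a).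
    + exists (mkposreal y Hy). intros z Hz. cbn in Hz. unfold ball in Hz; cbn in Hz.
      unfold AbsRing_ball, abs, minus, plus, opp in Hz; cbn in Hz.
      rewrite rpow_pos_eq. reflexivity. apply Rabs_def2 in Hz. lra.
    + rewrite rpow_pos_eq by lra. apply is_derive_Reals, derivable_pt_lim_power; lra.
  - destruct Hy as [Hy|Hy].
    + apply is_derive_ext_loc with (fun _ => 0).
      * assert (Hp : 0 < - y) by lra. exists (mkposreal _ Hp). intros z Hz.
        unfold ball in Hz; cbn in Hz.
        unfold AbsRing_ball, abs, minus, plus, opp in Hz; cbn in Hz.
        apply Rabs_def2 in Hz. rewrite rpow_nonpos. reflexivity. lra.
      * rewrite rpow_nonpos by lra. rewrite Rmult_0_r. apply is_derive_Reals, derivable_pt_lim_const.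
    + subst y. rewrite rpow_0, Rmult_0_r. apply is_derive_Reals.
      intros eps Heps.
      assert (Hd : 0 < Rpower eps (/ (a - 1))) by (unfold Rpower; apply exp_pos).
      exists (mkposreal _ Hd). intros h Hh0 Hh. cbn in Hh.
      rewrite Rplus_0_l, rpow_0, Rminus_0_r, Rminus_0_r.
      destruct (Rle_dec h 0).
      * rewrite rpow_nonpos by lra. unfold Rdiv. rewrite Rmult_0_l, Rabs_R0. lra.
      * rewrite rpow_split by lra. rewrite rpow_pos_eq by lra.
        replace (h * Rpower h (a - 1) / h) with (Rpower h (a-1)) by (field; lra).
        rewrite Rabs_pos_eq by (unfold Rpower; left; apply exp_pos).
        rewrite Rabs_pos_eq in Hh by lra.
        apply Rlt_le_trans with (Rpower (Rpower eps (/ (a - 1))) (a - 1)).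
        apply Rlt_Rpower_l; lra.
        rewrite Rpower_mult. rewrite Rinv_l by lra. rewrite Rpower_1 by lra. lra.
Qed.

Lemma loc_ball (x r : R) (P : R -> Prop) : 0 < r ->
  (forall z, Rabs (z - x) < r -> P z) -> locally x P.
Proof.
  intros Hr H. exists (mkposreal r Hr). intros z Hz. apply H.
  unfold ball in Hz; cbn in Hz. unfold AbsRing_ball, abs, minus, plus, opp in Hz; cbn in Hz.
  exact Hz.
Qed.

Lemma cont_bound (f : R -> R) a b : a <= b ->
  (forall x, a <= x <= b -> continuous f x) ->
  exists K, 0 <= K /\ forall x, a <= x <= b -> Rabs (f x) <= K.
Proof.
  intros Hab Hc.
  destruct (continuity_ab_maj f a b Hab) as [M1 [H1 _]].
  { intros c Hc'. apply continuity_pt_filterlim. apply Hc; auto. }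
  destruct (continuity_ab_maj (fun x => - f x) a b Hab) as [M2 [H2 _]].
  { intros c Hc'. apply continuity_pt_opp. apply continuity_pt_filterlim. apply Hc; auto. }
  exists (Rabs (f M1) + Rabs (f M2)). split.
  - pose proof (Rabs_pos (f M1)); pose proof (Rabs_pos (f M2)); lra.
  - intros x Hx. specialize (H1 x Hx). specialize (H2 x Hx).
    pose proof (Rle_abs (f M1)). pose proof (Rle_abs (- f M2)). rewrite Rabs_Ropp in H0.
    pose proof (Rabs_pos (f M1)); pose proof (Rabs_pos (f M2)).
    unfold Rabs at 1. destruct (Rcase_abs (f x)); lra.
Qed.

Lemma decr_lemma (f df : R -> R) a b : a <= b ->
  (forall x, a <= x <= b -> is_derive f x (df x)) ->
  (forall x, a <= x <= b -> df x <= 0) -> f b <= f a.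
Proof.
  intros Hab Hd Hneg.
  destruct (MVT_gen f a b df) as [c [Hc Heq]].
  - intros x Hx. apply Hd. rewrite Rmin_left, Rmax_right in Hx; lra.
  - intros x Hx. apply continuity_pt_filterlim. apply (ex_derive_continuous f).
    eexists. apply Hd. rewrite Rmin_left, Rmax_right in Hx; lra.
  - rewrite Rmin_left, Rmax_right in Hc by lra.
    specialize (Hneg c Hc). assert (df c * (b - a) <= 0).
    { apply Rmult_le_0_r; lra. } lra.
Qed.

Lemma isd_eq (f : R -> R) (x l l' : R) : is_derive f x l -> l = l' -> is_derive f x l'.
Proof. intros H ->; exact H. Qed.
Lemma isd_mult (f g : R -> R) x df dg : is_derive f x df -> is_derive g x dg ->
  is_derive (fun y => f y * g y) x (df * g x + f x * dg).
Proof. intros H1 H2. exact (is_derive_mult (K:=R_AbsRing) f g x df dg H1 H2 Rmult_comm). Qed.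
Lemma isd_plus (f g : R -> R) x df dg : is_derive f x df -> is_derive g x dg ->
  is_derive (fun y => f y + g y) x (df + dg).
Proof. intros H1 H2. exact (is_derive_plus (K:=R_AbsRing) f g x df dg H1 H2). Qed.
Lemma isd_comp (f g : R -> R) x df dg : is_derive f (g x) df -> is_derive g x dg ->
  is_derive (fun y => f (g y)) x (dg * df).
Proof. intros H1 H2. exact (is_derive_comp (K:=R_AbsRing) f g x df dg H1 H2). Qed.
Lemma isd_exp x : is_derive exp x (exp x).
Proof. apply is_derive_Reals, derivable_pt_lim_exp. Qed.
Lemma isd_const (a x : R) : is_derive (fun _ => a) x 0.
Proof. apply is_derive_Reals, derivable_pt_lim_const. Qed.
Lemma isd_id x : is_derive (fun y => y) x 1.
Proof. apply is_derive_Reals, derivable_pt_lim_id. Qed.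
Lemma isd_cont (f : R -> R) (x l : R) : is_derive f x l -> continuous f x.
Proof. intros H. apply (ex_derive_continuous (K:=R_AbsRing) (V:=R_NormedModule)). exists l; exact H. Qed.

Lemma FTC (f : R -> R) (Hf : forall x, continuous f x) t :
  is_derive (fun u => RInt f 0 u) t (f t).
Proof.
  apply (is_derive_RInt f (fun u => RInt f 0 u) 0 t).
  - apply filter_forall. intros u. apply (RInt_correct f 0 u).
    apply (ex_RInt_continuous (V:=R_CompleteNormedModule)). intros; apply Hf.
  - apply Hf.
Qed.

Lemma exRInt (f : R -> R) (Hf : forall x, continuous f x) a b : ex_RInt f a b.
Proof. apply (ex_RInt_continuous (V:=R_CompleteNormedModule)). intros; apply Hf. Qed.

Lemma RInt_split (f : R -> R) (Hf : forall x, continuous f x) a b :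
  RInt f a b = RInt f 0 b - RInt f 0 a.
Proof.
  assert (H : RInt f 0 a + RInt f a b = RInt f 0 b).
  { exact (RInt_Chasles (V:=R_CompleteNormedModule) f 0 a b (exRInt f Hf 0 a) (exRInt f Hf a b)). }
  lra.
Qed.

Section PhiSec.
Variable b : R -> R.
Hypothesis Hb_der : forall t, 0 <= t -> ex_derive b t.
Hypothesis Hb_pos : forall t, 0 <= t -> 0 < b t.
Variables c T : R.
Hypothesis Hc : c < 1.
Hypothesis HT : forall t, T <= t -> Rabs (Derive b t) / (b t) ^ 2 <= c.

Definition bt t := b (Rmax t 0).
Lemma bt_pos t : 0 < bt t.
Proof. apply Hb_pos. apply Rmax_r. Qed.

Lemma bt_cont t : continuous bt t.
Proof.
  unfold bt. apply (continuous_comp (fun t => Rmax t 0) b).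
  - apply continuous_ext with (fun t => (t + Rabs t) / 2).
    + intros x. unfold Rmax, Rabs. destruct (Rle_dec x 0), (Rcase_abs x); lra.
    + apply (continuous_scal_l (fun t => t + Rabs t) (/2)).
      apply (continuous_plus (fun t => t) Rabs). apply continuous_id. apply continuous_Rabs.
  - apply (ex_derive_continuous (K:=R_AbsRing) (V:=R_NormedModule)). apply Hb_der. apply Rmax_r.
Qed.

Definition B t := RInt bt 0 t.
Lemma B_der t : is_derive B t (bt t).
Proof. apply FTC, bt_cont. Qed.

Definition E s := exp (- B s).
Lemma E_der s : is_derive E s (- bt s * E s).
Proof.
  unfold E. eapply isd_eq.
  apply (isd_comp exp (fun s => - B s)). apply isd_exp.
  apply (is_derive_opp (K:=R_AbsRing) B s). apply B_der.
  reflexivity.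
Qed.
Lemma E_cont s : continuous E s.
Proof. eapply isd_cont, E_der. Qed.
Lemma E_pos s : 0 < E s.
Proof. apply exp_pos. Qed.

Definition F t := RInt E 0 t.
Lemma F_der t : is_derive F t (E t).
Proof. apply FTC, E_cont. Qed.
Lemma F_mono x y : x <= y -> F x <= F y.
Proof.
  intros Hxy.
  assert (- F y <= - F x); [|lra].
  apply (decr_lemma (fun u => - F u) (fun u => - E u)); auto.
  - intros u _. apply (is_derive_opp (K:=R_AbsRing) F u). apply F_der.
  - intros u _. pose proof (E_pos u); lra.
Qed.
Lemma F0 : F 0 = 0.
Proof. unfold F. rewrite RInt_point. reflexivity. Qed.

Definition T1 := Rmax T 1.

Lemma tail t S : T1 <= t <= S -> (1 - c) * (F S - F t) <= E t / bt t.
Proof.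
  intros [Ht HtS].
  assert (HT1 : 1 <= T1 /\ T <= T1) by (unfold T1; split; [apply Rmax_r|apply Rmax_l]).
  set (k := fun u => E u * / bt u + (1 - c) * F u).
  assert (k S <= k t).
  { apply (decr_lemma k (fun u => E u * (- c - Derive b u / (b u)^2))); auto.
    - intros u Hu.
      assert (Hb1 : is_derive bt u (Derive b u)).
      { apply is_derive_ext_loc with b.
        - apply loc_ball with 1; [lra|]. intros z Hz. unfold bt.
          apply Rabs_def2 in Hz. rewrite Rmax_left by lra. reflexivity.
        - apply Derive_correct. apply Hb_der. lra. }
      unfold k. eapply isd_eq.
      apply isd_plus. apply isd_mult. apply E_der. apply is_derive_inv. apply Hb1.
      pose proof (bt_pos u); lra.
      apply is_derive_scal. apply F_der.
      unfold bt. rewrite Rmax_left by lra. pose proof (Hb_pos u ltac:(lra)). field; lra.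
    - intros u Hu. pose proof (E_pos u). apply Rmult_le_0_l. lra.
      specialize (HT u ltac:(lra)). pose proof (Hb_pos u ltac:(lra)).
      assert (0 < b u ^ 2) by (apply pow_lt; lra).
      assert (- (Derive b u) / b u ^ 2 <= Rabs (Derive b u) / b u ^ 2).
      { unfold Rdiv. apply Rmult_le_compat_r. left; apply Rinv_0_lt_compat; lra.
        rewrite <- Rabs_Ropp. apply Rle_abs. }
      unfold Rdiv in *. lra. }
  unfold k in H. pose proof (E_pos S). pose proof (bt_pos S).
  assert (0 <= E S * / bt S) by (apply Rmult_le_pos; [lra|left; apply Rinv_0_lt_compat; lra]).
  unfold Rdiv. lra.
Qed.

Lemma F_bnd : bound (fun y => exists S, y = F S).
Proof.
  exists (F T1 + E T1 / bt T1 / (1 - c)). intros y [S ->].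
  assert (0 < 1 - c) by lra.
  assert (0 <= E T1 / bt T1 / (1 - c)).
  { unfold Rdiv. apply Rmult_le_pos. apply Rmult_le_pos. left; apply E_pos.
    left; apply Rinv_0_lt_compat, bt_pos. left; apply Rinv_0_lt_compat; lra. }
  destruct (Rle_dec S T1).
  - pose proof (F_mono S T1 r). lra.
  - pose proof (tail T1 S ltac:(lra)).
    assert (F S - F T1 <= E T1 / bt T1 / (1 - c)).
    { replace (E T1 / bt T1 / (1 - c)) with ((E T1 / bt T1) * / (1 - c)) by reflexivity.
      replace (F S - F T1) with (((1 - c) * (F S - F T1)) * / (1 - c)) by (field; lra).
      apply Rmult_le_compat_r; [left; apply Rinv_0_lt_compat; lra| lra]. }
    lra.
Qed.

Lemma F_ne : exists y, (fun y => exists S, y = F S) y.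
Proof. exists (F 0). exists 0. reflexivity. Qed.

Definition L := proj1_sig (completeness _ F_bnd F_ne).
Lemma L_ub S : F S <= L.
Proof. destruct (proj2_sig (completeness _ F_bnd F_ne)) as [Hm _]. unfold L. apply Hm. exists S; auto. Qed.
Lemma L_least U : (forall S, F S <= U) -> L <= U.
Proof. intros H. destruct (proj2_sig (completeness _ F_bnd F_ne)) as [_ Hm]. unfold L. apply Hm.
  intros y [S ->]. apply H. Qed.
Lemma L_approx eps : 0 < eps -> exists S, L - eps < F S.
Proof.
  intros He. destruct (Classical_Prop.classic (exists S, L - eps < F S)) as [H|H]; auto.
  exfalso. assert (L <= L - eps); [|lra]. apply L_least. intros S.
  destruct (Rle_dec (F S) (L - eps)); auto. exfalso; apply H. exists S; lra.
Qed.

Definition J t := L - F t.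
Definition Phit t := exp (B t) * J t.

Lemma Phit_der t : is_derive Phit t (bt t * Phit t - 1).
Proof.
  unfold Phit, J. eapply isd_eq.
  apply isd_mult. apply (isd_comp exp B). apply isd_exp. apply B_der.
  apply (is_derive_minus (K:=R_AbsRing) (fun _ => L) F). apply isd_const. apply F_der.
  unfold E. change (minus 0 (exp (- B t))) with (0 - exp (- B t)).
  rewrite exp_Ropp. field. apply Rgt_not_eq, exp_pos.
Qed.
Lemma Phit_cont t : continuous Phit t.
Proof. eapply isd_cont, Phit_der. Qed.
Lemma Phit_ge0 t : 0 <= Phit t.
Proof. unfold Phit, J. apply Rmult_le_pos. left; apply exp_pos. pose proof (L_ub t); lra. Qed.

Lemma B_mono x y : x <= y -> B x <= B y.
Proof.
  intros Hxy. assert (- B y <= - B x); [|lra].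
  apply (decr_lemma (fun u => - B u) (fun u => - bt u)); auto.
  - intros u _. apply (is_derive_opp (K:=R_AbsRing) B u). apply B_der.
  - intros u _. pose proof (bt_pos u); lra.
Qed.

Lemma bPhi_bnd : exists M, 0 <= M /\ forall t, 0 <= t -> bt t * Phit t <= M.
Proof.
  assert (HT1 : 1 <= T1) by (unfold T1; apply Rmax_r).
  destruct (cont_bound bt 0 T1 ltac:(lra) (fun x _ => bt_cont x)) as [Kb [HKb HKb']].
  assert (HL : 0 <= L) by (pose proof (L_ub 0); rewrite F0 in H; lra).
  exists (/ (1 - c) + Kb * exp (B T1) * L). split.
  { assert (0 < / (1 - c)) by (apply Rinv_0_lt_compat; lra).
    assert (0 <= Kb * exp (B T1) * L). { apply Rmult_le_pos; auto. apply Rmult_le_pos; auto. left; apply exp_pos. }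
    lra. }
  intros t Ht.
  assert (0 < / (1 - c)) by (apply Rinv_0_lt_compat; lra).
  assert (0 <= Kb * exp (B T1) * L). { apply Rmult_le_pos; auto. apply Rmult_le_pos; auto. left; apply exp_pos. }
  destruct (Rle_dec T1 t).
  - assert (HJ : J t <= E t / bt t / (1 - c)).
    { unfold J. assert (L <= F t + E t / bt t / (1 - c)); [|lra]. apply L_least. intros S.
      assert (0 <= E t / bt t / (1 - c)).
      { unfold Rdiv. apply Rmult_le_pos. apply Rmult_le_pos. left; apply E_pos.
        left; apply Rinv_0_lt_compat, bt_pos. lra. }
      destruct (Rle_dec S t). pose proof (F_mono S t r0). lra.
      pose proof (tail t S ltac:(lra)).
      assert (F S - F t <= E t / bt t / (1 - c)); [|lra].
      replace (E t / bt t / (1 - c)) with ((E t / bt t) * / (1 - c)) by reflexivity.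
      replace (F S - F t) with (((1 - c) * (F S - F t)) * / (1 - c)) by (field; lra).
      apply Rmult_le_compat_r; [left; apply Rinv_0_lt_compat; lra| lra]. }
    unfold Phit. pose proof (bt_pos t). pose proof (exp_pos (B t)).
    assert (bt t * (exp (B t) * J t) <= bt t * (exp (B t) * (E t / bt t / (1 - c)))).
    { apply Rmult_le_compat_l. lra. apply Rmult_le_compat_l. lra. exact HJ. }
    assert (bt t * (exp (B t) * (E t / bt t / (1 - c))) = / (1 - c)).
    { unfold E. rewrite exp_Ropp. field. split; lra. }
    lra.
  - assert (Hb : bt t <= Kb).
    { pose proof (HKb' t ltac:(lra)). pose proof (bt_pos t). rewrite Rabs_pos_eq in H1; lra. }
    assert (He : exp (B t) <= exp (B T1)).
    { destruct (Req_dec (B t) (B T1)) as [->|]; [lra|]. left; apply exp_increasing.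
      pose proof (B_mono t T1 ltac:(lra)). lra. }
    assert (HJ : 0 <= J t <= L). { unfold J. pose proof (L_ub t). pose proof (F_mono 0 t Ht). rewrite F0 in H2. lra. }
    unfold Phit. pose proof (bt_pos t). pose proof (exp_pos (B t)).
    assert (bt t * (exp (B t) * J t) <= Kb * (exp (B T1) * L)).
    { apply Rmult_le_compat; try lra. apply Rmult_le_pos; lra.
      apply Rmult_le_compat; lra. }
    lra.
Qed.


Lemma Phi2_bnd M : 0 <= M -> (forall t, 0 <= t -> bt t * Phit t <= M) ->
  forall t, 0 <= t -> Phit t ^ 2 <= Phit 0 ^ 2 + 2 * (M + 1) * RInt Phit 0 t.
Proof.
  intros HM HbM t Ht.
  set (k := fun u => Phit u * Phit u - 2 * (M + 1) * RInt Phit 0 u).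
  assert (k t <= k 0).
  { apply (decr_lemma k (fun u => 2 * Phit u * (bt u * Phit u - 1) - 2 * (M + 1) * Phit u)); auto.
    - intros u _. unfold k. eapply isd_eq.
      apply (is_derive_minus (K:=R_AbsRing) (fun u => Phit u * Phit u) (fun u => 2 * (M + 1) * RInt Phit 0 u)).
      apply isd_mult; apply Phit_der. apply is_derive_scal. apply FTC. apply Phit_cont.
      change (minus ?a ?b) with (a - b). ring.
    - intros u Hu. pose proof (HbM u ltac:(lra)). pose proof (Phit_ge0 u).
      assert (0 <= Phit u * (M + 1 - (bt u * Phit u - 1))) by (apply Rmult_le_pos; lra).
      lra. }
  unfold k in H. rewrite (RInt_point 0 Phit : RInt Phit 0 0 = 0) in H. nra.
Qed.

Lemma RIntPhit_ge0 t : 0 <= t -> 0 <= RInt Phit 0 t.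
Proof.
  intros Ht. apply RInt_ge_0; auto. apply exRInt, Phit_cont. intros; apply Phit_ge0.
Qed.

Lemma Phi_eq t : 0 <= t -> Phi b t = Phit t.
Proof.
  intros Ht. unfold Phi. apply is_RInt_gen_unique.
  unfold is_RInt_gen. apply filterlimi_locally. intros eps.
  pose proof (exp_pos (B t)) as Hep.
  destruct (L_approx (eps / exp (B t))) as [S0 HS0].
  { apply Rdiv_lt_0_compat; [apply cond_pos| exact Hep]. }
  apply Filter_prod with (Q := fun a => a = t) (R := fun y => Rmax S0 t < y).
  - reflexivity.
  - exists (Rmax S0 t). intros; auto.
  - intros a y -> Hy. simpl. exists (exp (B t) * (F y - F t)). split.
    + apply is_RInt_ext with (fun s => exp (B t) * E s).
      * intros x Hx. rewrite Rmin_left, Rmax_right in Hx by (pose proof (Rmax_r S0 t); lra).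
        assert (RInt b t x = B x - B t).
        { rewrite (RInt_ext b bt). unfold B. apply RInt_split. apply bt_cont.
          intros z Hz. rewrite Rmin_left, Rmax_right in Hz by lra. unfold bt.
          rewrite Rmax_left by lra. reflexivity. }
        rewrite H. unfold E. rewrite <- exp_plus. f_equal. ring.
      * apply (is_RInt_scal (V:=R_NormedModule) E t y (exp (B t))).
        replace (F y - F t) with (RInt E t y).
        apply (RInt_correct (V:=R_CompleteNormedModule)). apply exRInt, E_cont.
        unfold F. apply RInt_split. apply E_cont.
    + unfold ball; simpl. unfold AbsRing_ball, abs, minus, plus, opp; simpl.
      assert (HFy : F S0 <= F y) by (apply F_mono; pose proof (Rmax_l S0 t); lra).
      pose proof (L_ub y).
      replace (exp (B t) * (F y - F t) + - Phit t) with (- (exp (B t) * (L - F y))) by (unfold Phit, J; ring).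
      rewrite Rabs_Ropp, Rabs_pos_eq by (apply Rmult_le_pos; lra).
      assert (L - F y < eps / exp (B t)) by lra.
      apply Rmult_lt_compat_l with (r := exp (B t)) in H0; auto.
      replace (exp (B t) * (eps / exp (B t))) with (pos eps) in H0 by (field; lra). exact H0.
Qed.

Lemma RInt_Phi_eq t : 0 <= t -> RInt (Phi b) 0 t = RInt Phit 0 t.
Proof.
  intros Ht. apply RInt_ext. intros x Hx. rewrite Rmin_left, Rmax_right in Hx by lra.
  apply Phi_eq. lra.
Qed.

End PhiSec.

Section EtaSec.
Variable eta : R -> R.
Hypothesis Heta_d1 : forall s, 0 < s -> ex_derive eta s.
Hypothesis Heta_d2 : forall s, 0 < s -> ex_derive (Derive eta) s.
Hypothesis Heta_c2 : forall s, 0 < s -> continuous (Derive (Derive eta)) s.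
Hypothesis Heta_one : forall s, 0 <= s <= 1/2 -> eta s = 1.

Definition etat s := if Rle_dec s (1/2) then 1 else eta s.
Lemma etat_eq s : 0 < s -> etat s = eta s.
Proof. intros. unfold etat. destruct (Rle_dec s (1/2)); auto. rewrite Heta_one; auto; lra. Qed.
Lemma etat_loc1 s : s < 1/2 -> locally s (fun z => 1 = etat z).
Proof. intros. apply loc_ball with (1/2 - s). lra. intros z Hz. apply Rabs_def2 in Hz.
  unfold etat. destruct (Rle_dec z (1/2)); auto. lra. Qed.
Lemma etat_loc2 s : 0 < s -> locally s (fun z => eta z = etat z).
Proof. intros. apply loc_ball with s. lra. intros z Hz. apply Rabs_def2 in Hz.
  rewrite etat_eq; auto; lra. Qed.

Definition eta1 := Derive etat.
Definition eta2 := Derive eta1.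

Lemma etat_ex s : ex_derive etat s.
Proof.
  destruct (Rlt_le_dec s (1/2)).
  - exists 0. apply is_derive_ext_loc with (fun _ => 1). apply etat_loc1; auto. apply isd_const.
  - exists (Derive eta s). apply is_derive_ext_loc with eta. apply etat_loc2; lra.
    apply Derive_correct. apply Heta_d1; lra.
Qed.
Lemma eta1_der s : is_derive etat s (eta1 s).
Proof. apply Derive_correct, etat_ex. Qed.
Lemma eta1_zero s : s < 1/2 -> eta1 s = 0.
Proof. intros. unfold eta1. apply is_derive_unique.
  apply is_derive_ext_loc with (fun _ => 1). apply etat_loc1; auto. apply isd_const. Qed.
Lemma eta1_loc0 s : s < 1/2 -> locally s (fun z => 0 = eta1 z).
Proof. intros. apply loc_ball with (1/2 - s). lra. intros z Hz. apply Rabs_def2 in Hz.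
  rewrite eta1_zero; auto; lra. Qed.
Lemma eta1_loc s : 0 < s -> locally s (fun z => Derive eta z = eta1 z).
Proof. intros. apply loc_ball with s. lra. intros z Hz. apply Rabs_def2 in Hz.
  unfold eta1. apply Derive_ext_loc. apply etat_loc2. lra. Qed.
Lemma eta1_ex s : ex_derive eta1 s.
Proof.
  destruct (Rlt_le_dec s (1/2)).
  - exists 0. apply is_derive_ext_loc with (fun _ => 0). apply eta1_loc0; auto. apply isd_const.
  - exists (Derive (Derive eta) s). apply is_derive_ext_loc with (Derive eta). apply eta1_loc; lra.
    apply Derive_correct. apply Heta_d2; lra.
Qed.
Lemma eta2_der s : is_derive eta1 s (eta2 s).
Proof. apply Derive_correct, eta1_ex. Qed.
Lemma eta2_zero s : s < 1/2 -> eta2 s = 0.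
Proof. intros. unfold eta2. apply is_derive_unique.
  apply is_derive_ext_loc with (fun _ => 0). apply eta1_loc0; auto. apply isd_const. Qed.
Lemma eta2_cont s : 0 < s -> continuous eta2 s.
Proof.
  intros Hs. apply continuous_ext_loc with (Derive (Derive eta)).
  - apply loc_ball with s. lra. intros z Hz. apply Rabs_def2 in Hz.
    unfold eta2. apply Derive_ext_loc. apply eta1_loc. lra.
  - apply Heta_c2; auto.
Qed.

Lemma eta_bounds : exists K0 K1 K2, 0 <= K0 /\ 0 <= K1 /\ 0 <= K2 /\
  forall s, 1/2 <= s <= 1 -> Rabs (etat s) <= K0 /\ Rabs (eta1 s) <= K1 /\ Rabs (eta2 s) <= K2.
Proof.
  destruct (cont_bound etat (1/2) 1 ltac:(lra)) as [K0 [H0 H0']].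
  { intros x _. eapply isd_cont. apply eta1_der. }
  destruct (cont_bound eta1 (1/2) 1 ltac:(lra)) as [K1 [H1 H1']].
  { intros x _. eapply isd_cont. apply eta2_der. }
  destruct (cont_bound eta2 (1/2) 1 ltac:(lra)) as [K2 [H2 H2']].
  { intros x Hx. apply eta2_cont. lra. }
  exists K0, K1, K2. repeat split; auto.
Qed.

Variable q : R.
Hypothesis Hq : 2 < q.
Definition G y := rpow y q.
Definition G1 y := q * rpow y (q - 1).
Definition G2 y := q * (q - 1) * rpow y (q - 2).
Lemma G_der y : is_derive G y (G1 y).
Proof. apply rpow_derive. lra. Qed.
Lemma G1_der y : is_derive G1 y (G2 y).
Proof. unfold G1, G2. eapply isd_eq. apply is_derive_scal. apply rpow_derive. lra.
  replace (q - 1 - 1) with (q - 2) by ring. ring. Qed.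

Lemma chain2 (u u1 u2 : R -> R) :
  (forall t, is_derive u t (u1 t)) -> (forall t, is_derive u1 t (u2 t)) -> forall t,
  Derive (fun t => G (etat (u t))) t = G1 (etat (u t)) * eta1 (u t) * u1 t /\
  Derive (fun t => Derive (fun t => G (etat (u t))) t) t =
    G2 (etat (u t)) * eta1 (u t) ^ 2 * u1 t ^ 2 + G1 (etat (u t)) * eta2 (u t) * u1 t ^ 2
    + G1 (etat (u t)) * eta1 (u t) * u2 t.
Proof.
  intros Hu Hu1.
  assert (D1 : forall t, Derive (fun t => G (etat (u t))) t = G1 (etat (u t)) * eta1 (u t) * u1 t).
  { intros t. apply is_derive_unique. eapply isd_eq.
    apply (isd_comp (fun y => G (etat y)) u). apply (isd_comp G etat). apply G_der. apply eta1_der.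
    apply Hu. ring. }
  intros t. split; auto.
  rewrite (Derive_ext (fun t => Derive (fun t => G (etat (u t))) t) (fun t => G1 (etat (u t)) * eta1 (u t) * u1 t) t D1). apply is_derive_unique. eapply isd_eq.
  apply isd_mult. apply isd_mult.
  apply (isd_comp (fun y => G1 (etat y)) u). apply (isd_comp G1 etat). apply G1_der. apply eta1_der. apply Hu.
  apply (isd_comp eta1 u). apply eta2_der. apply Hu. apply Hu1.
  cbv beta. ring.
Qed.

Variable p : R.
Hypothesis Hqp : q * (1 / p) = q - 2.

Definition W s := rpow (rpow (etaStar eta s) q) (1 / p).

Lemma W_ge0 s : 0 <= W s.
Proof. apply rpow_ge0. Qed.

Lemma bnds K0 K1 K2 : 0 <= K0 -> 0 <= K1 -> 0 <= K2 ->
  (forall s, 1/2 <= s <= 1 -> Rabs (etat s) <= K0 /\ Rabs (eta1 s) <= K1 /\ Rabs (eta2 s) <= K2) ->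
  forall s, s <= 1 ->
  Rabs (G1 (etat s) * eta1 s) <= q * K0 * K1 * W s /\
  Rabs (G1 (etat s) * eta2 s) <= q * K0 * K2 * W s /\
  Rabs (G2 (etat s) * eta1 s ^ 2) <= q * (q - 1) * K1 ^ 2 * W s.
Proof.
  intros H0 H1 H2 HK s Hs1.
  pose proof (W_ge0 s) as HW.
  assert (Hc0 : 0 <= q * K0 * K1 * W s /\ 0 <= q * K0 * K2 * W s /\ 0 <= q * (q - 1) * K1 ^ 2 * W s).
  { repeat split; repeat apply Rmult_le_pos; try lra; try apply pow_le; lra. }
  destruct (Rlt_le_dec s (1/2)) as [Hs|Hs].
  - rewrite eta1_zero, eta2_zero by auto. rewrite !Rmult_0_r, Rabs_R0.
    replace (0 ^ 2) with 0 by ring. rewrite Rmult_0_r, Rabs_R0. lra.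
  - destruct (HK s (conj Hs Hs1)) as [Ke [K1e K2e]].
    assert (Hst : etaStar eta s = etat s).
    { unfold etaStar. destruct (Rlt_dec s (1/2)); [lra|]. rewrite etat_eq; auto; lra. }
    unfold W. rewrite Hst, rpow_rpow, Hqp.
    set (e := etat s) in *.
    destruct (Rle_dec e 0) as [He|He].
    + unfold G1, G2. rewrite !(rpow_nonpos e) by auto. rewrite !Rmult_0_r, !Rmult_0_l, Rabs_R0. lra.
    + assert (HG1 : G1 e = q * e * rpow e (q - 2)).
      { unfold G1. rewrite (rpow_split e (q - 1)) by lra. replace (q - 1 - 1) with (q - 2) by ring. ring. }
      assert (Hr : 0 <= rpow e (q - 2)) by apply rpow_ge0.
      rewrite Rabs_pos_eq in Ke by lra.
      assert (Hqe : 0 <= q * e * rpow e (q - 2)) by (repeat apply Rmult_le_pos; lra).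
      rewrite HG1. repeat split.
      * rewrite Rabs_mult, (Rabs_pos_eq (q * e * _)) by auto.
        replace (q * K0 * K1 * rpow e (q - 2)) with ((q * K0 * rpow e (q - 2)) * K1) by ring.
        apply Rmult_le_compat; try lra. apply Rabs_pos.
        apply Rmult_le_compat_r; auto. apply Rmult_le_compat_l; lra.
      * rewrite Rabs_mult, (Rabs_pos_eq (q * e * _)) by auto.
        replace (q * K0 * K2 * rpow e (q - 2)) with ((q * K0 * rpow e (q - 2)) * K2) by ring.
        apply Rmult_le_compat; try lra. apply Rabs_pos.
        apply Rmult_le_compat_r; auto. apply Rmult_le_compat_l; lra.
      * unfold G2. rewrite Rabs_mult, Rabs_pos_eq by (repeat apply Rmult_le_pos; lra).
        rewrite <- RPow_abs.
        replace (q * (q - 1) * K1 ^ 2 * rpow e (q - 2)) with ((q * (q - 1) * rpow e (q - 2)) * K1 ^ 2) by ring.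
        apply Rmult_le_compat_l. repeat apply Rmult_le_pos; lra.
        apply pow_incr. split. apply Rabs_pos. auto.
Qed.

End EtaSec.

Lemma normsq_ge0 N x : 0 <= normsq N x.
Proof. induction N; simpl. lra. pose proof (pow2_ge_0 (x N)). lra. Qed.

Lemma normsq_upd_out N x i h : (N <= i)%nat -> normsq N (upd x i h) = normsq N x.
Proof.
  induction N; intros Hi; simpl. reflexivity.
  rewrite IHN by lia. unfold upd. destruct (Nat.eqb N i) eqn:E.
  apply Nat.eqb_eq in E. lia. reflexivity.
Qed.

Lemma normsq_upd N x i h : (i < N)%nat -> normsq N (upd x i h) = normsq N x - x i ^ 2 + h ^ 2.
Proof.
  induction N; intros Hi. lia. simpl.
  destruct (Nat.eq_dec i N) as [->|Hne].
  - rewrite normsq_upd_out by lia. unfold upd. rewrite Nat.eqb_refl. ring.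
  - rewrite IHN by lia. unfold upd. destruct (Nat.eqb N i) eqn:E.
    apply Nat.eqb_eq in E. lia. ring.
Qed.

Lemma xi_le N x i : (i < N)%nat -> x i ^ 2 <= normsq N x.
Proof.
  induction N; intros Hi. lia. simpl.
  destruct (Nat.eq_dec i N) as [->|Hne].
  - pose proof (normsq_ge0 N x). lra.
  - pose proof (IHN ltac:(lia)). pose proof (pow2_ge_0 (x N)). lra.
Qed.

Lemma sumN_bound N f K : (forall i, (i < N)%nat -> Rabs (f i) <= K) -> Rabs (sumN N f) <= INR N * K.
Proof.
  induction N; intros H. simpl. rewrite Rabs_R0. lra.
  change (sumN (S N) f) with (sumN N f + f N). rewrite S_INR. eapply Rle_trans. apply Rabs_triang.
  pose proof (IHN (fun i Hi => H i ltac:(lia))). pose proof (H N ltac:(lia)). lra.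
Qed.

Lemma abs_mul_le X Y a c : Rabs X <= a -> Rabs Y <= c -> Rabs (X * Y) <= a * c.
Proof. intros. rewrite Rabs_mult. apply Rmult_le_compat; auto; apply Rabs_pos. Qed.

Lemma comb3 A Bv C X Y a bb g W Kx Ky :
  Rabs A <= a * W -> Rabs Bv <= bb * W -> Rabs C <= g * W -> 0 <= X <= Kx -> Rabs Y <= Ky ->
  Rabs (A * X + Bv * X + C * Y) <= (a + bb) * W * Kx + g * W * Ky.
Proof.
  intros HA HB HC HX HY.
  eapply Rle_trans. apply Rabs_triang. eapply Rle_trans. apply Rplus_le_compat_r. apply Rabs_triang.
  assert (Rabs X <= Kx) by (rewrite Rabs_pos_eq; lra).
  pose proof (abs_mul_le A X _ _ HA H). pose proof (abs_mul_le Bv X _ _ HB H).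
  pose proof (abs_mul_le C Y _ _ HC HY). nra.
Qed.

Lemma pos3 a b c : 0 <= a -> 0 <= b -> 0 <= c -> 0 <= a * b * c.
Proof. intros. apply Rmult_le_pos; auto. apply Rmult_le_pos; auto. Qed.

Lemma isd_sq x : is_derive (fun h => h ^ 2) x (2 * x).
Proof. eapply isd_eq. apply is_derive_pow. apply isd_id. simpl. ring. Qed.

Theorem lemma2p5 (p : R) (N : nat) (b eta : R -> R)
  (Hp : 1 < p)
  (Hb_der : forall t, 0 <= t -> ex_derive b t)
  (Hb_cont : forall t, 0 <= t -> continuous (Derive b) t)
  (Hb_pos : forall t, 0 <= t -> 0 < b t)
  (Hb_limsup : exists c, c < 1 /\ exists T, forall t, T <= t ->
                 Rabs (Derive b t) / (b t) ^ 2 <= c)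
  (Heta_d1 : forall s, 0 < s -> ex_derive eta s)
  (Heta_d2 : forall s, 0 < s -> ex_derive (Derive eta) s)
  (Heta_c2 : forall s, 0 < s -> continuous (Derive (Derive eta)) s)
  (Heta_one : forall s, 0 <= s <= 1/2 -> eta s = 1)
  (Heta_dec : forall s1 s2, 1/2 < s1 -> s1 <= s2 -> s2 < 1 -> eta s2 <= eta s1)
  (Heta_zero : forall s, 1 <= s -> eta s = 0) :
  (forall R0, 0 < R0 -> forall x t,
      (inP b N (R0 / 2) x t -> psiR b eta p N R0 x t = 1) /\
      (0 <= t -> ~ inP b N R0 x t -> psiR b eta p N R0 x t = 0)) /\
  (exists C1, 0 < C1 /\ forall R0, 0 < R0 -> forall x t, inP b N R0 x t ->
      Rabs (Derive (fun s => psiR b eta p N R0 x s) t)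
        <= C1 / R0 * Phi b t * rpow (psiRstar b eta p N R0 x t) (1 / p)) /\
  (exists C2, 0 < C2 /\ forall R0, 0 < R0 -> forall x t, inP b N R0 x t ->
      Rabs (laplacian N (fun y => psiR b eta p N R0 y t) x)
        <= C2 / R0 * rpow (psiRstar b eta p N R0 x t) (1 / p)) /\
  (~ ex_RInt_gen (fun t => / b t) (at_point 0) (Rbar_locally p_infty) ->
    exists C3, 0 < C3 /\ forall R0, 0 < R0 -> forall x t, inP b N R0 x t ->
      Rabs (Derive (fun s => Derive (fun s' => psiR b eta p N R0 x s') s) t)
        <= C3 / R0 * rpow (psiRstar b eta p N R0 x t) (1 / p)).
Proof.
  destruct Hb_limsup as [c [Hc [T HT]]].
  set (Ph := Phit b Hb_der Hb_pos c T Hc HT).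
  set (q := 2 * conj_exp p).
  assert (Hq : 2 < q).
  { unfold q, conj_exp. assert (p / (p - 1) = 1 + / (p - 1)) by (field; lra).
    rewrite H. pose proof (Rinv_0_lt_compat (p - 1) ltac:(lra)). lra. }
  assert (Hqp : q * (1 / p) = q - 2) by (unfold q, conj_exp; field; lra).
  assert (HI : forall y, 0 <= y -> 0 <= RInt Ph 0 y) by (intros; apply RIntPhit_ge0; auto).
  assert (Hrho : forall x y, 0 <= y -> rho b N x y = 1 + normsq N x + RInt Ph 0 y).
  { intros x y Hy. unfold rho. rewrite (RInt_Phi_eq b Hb_der Hb_pos c T Hc HT y Hy). reflexivity. }
  assert (Hrho1 : forall x y, 0 <= y -> 1 <= rho b N x y).
  { intros x y Hy. rewrite Hrho by auto. pose proof (normsq_ge0 N x). pose proof (HI y Hy). lra. }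
  assert (Hpsi : forall R0 x y, 0 < R0 -> 0 <= y ->
     psiR b eta p N R0 x y = G q (etat eta (/ R0 * (1 + normsq N x + RInt Ph 0 y)))).
  { intros R0 x y HR0 Hy. unfold psiR, G, sR. rewrite <- Hrho by auto. rewrite etat_eq; auto.
    apply Rmult_lt_0_compat. apply Rinv_0_lt_compat; auto. pose proof (Hrho1 x y Hy). lra. }
  destruct (eta_bounds eta Heta_d1 Heta_d2 Heta_c2 Heta_one) as [K0 [K1 [K2 [HK0 [HK1 [HK2 HK]]]]]].
  pose proof (bnds eta Heta_one q Hq p Hqp K0 K1 K2 HK0 HK1 HK2 HK) as Hbn.
  destruct (bPhi_bnd b Hb_der Hb_pos c T Hc HT) as [M [HM HbM]].
  pose proof (Phi2_bnd b Hb_der Hb_pos c T Hc HT M HM HbM) as HP2.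
  fold Ph in HbM, HP2.
  pose proof (Phit_ge0 b Hb_der Hb_pos c T Hc HT) as HPh0. fold Ph in HPh0.
  set (ut := fun R0 x y => / R0 * (1 + normsq N x + RInt Ph 0 y)).
  set (u1 := fun R0 (y : R) => / R0 * Ph y).
  set (u2 := fun R0 (y : R) => / R0 * (bt b y * Ph y - 1)).
  assert (Hu : forall R0 x y, is_derive (ut R0 x) y (u1 R0 y)).
  { intros R0 x y. unfold ut, u1. apply is_derive_scal. eapply isd_eq.
    apply (isd_plus (fun _ => 1 + normsq N x) (fun y => RInt Ph 0 y)). apply isd_const.
    apply FTC. apply Phit_cont. ring. }
  assert (Hu1 : forall R0 y, is_derive (u1 R0) y (u2 R0 y)).
  { intros R0 y. unfold u1, u2. apply is_derive_scal. apply Phit_der. }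
  assert (HD1 : forall R0 x t, 0 < R0 -> 0 <= t ->
    Derive (fun s => psiR b eta p N R0 x s) t = Derive (fun s => G q (etat eta (ut R0 x s))) t).
  { intros R0 x t HR0 Ht. apply Derive_right_ext. intros y Hy. apply Hpsi; lra. }
  assert (HD2 : forall R0 x t, 0 < R0 -> 0 <= t ->
    Derive (fun s => Derive (fun s' => psiR b eta p N R0 x s') s) t =
    Derive (fun s => Derive (fun s' => G q (etat eta (ut R0 x s'))) s) t).
  { intros R0 x t HR0 Ht. apply Derive_right_ext. intros y Hy. apply HD1; lra. }
  assert (Hs : forall R0 x t, 0 < R0 -> 0 <= t -> ut R0 x t = sR b N R0 x t).
  { intros. unfold ut, sR. rewrite Hrho; auto. }
  assert (Hs1 : forall R0 x t, 0 < R0 -> inP b N R0 x t -> sR b N R0 x t <= 1).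
  { intros R0 x t HR0 [Ht Hr]. unfold sR.
    replace 1 with (/ R0 * R0) by (field; lra). apply Rmult_le_compat_l; auto.
    left; apply Rinv_0_lt_compat; auto. }
  split; [|split; [|split]].
  -
    intros R0 HR0 x t. split.
    + intros [Ht Hr]. unfold psiR, sR. rewrite Heta_one. apply rpow_1.
      pose proof (Hrho1 x t Ht). split.
      * apply Rmult_le_pos. left; apply Rinv_0_lt_compat; auto. lra.
      * replace (1/2) with (/ R0 * (R0 / 2)) by (field; lra).
        apply Rmult_le_compat_l; auto. left; apply Rinv_0_lt_compat; auto.
    + intros Ht Hn. assert (Hr : R0 < rho b N x t).
      { destruct (Rlt_le_dec R0 (rho b N x t)); auto. exfalso; apply Hn; split; auto. }
      unfold psiR, sR. rewrite Heta_zero. apply rpow_0.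
      replace 1 with (/ R0 * R0) by (field; lra). apply Rmult_le_compat_l. left; apply Rinv_0_lt_compat; auto. lra.
  -
    exists (q * K0 * K1 + 1). split.
    { assert (0 <= q * K0 * K1) by (apply pos3; lra). lra. }
    intros R0 HR0 x t Hin. pose proof Hin as [Ht Hr].
    rewrite HD1 by auto.
    destruct (chain2 eta Heta_d1 Heta_d2 Heta_one q Hq (ut R0 x) (u1 R0) (u2 R0) (Hu R0 x) (Hu1 R0) t) as [E1 _].
    rewrite E1. rewrite (Hs R0 x t HR0 Ht).
    change (rpow (psiRstar b eta p N R0 x t) (1 / p)) with (W eta q p (sR b N R0 x t)).
    rewrite (Phi_eq b Hb_der Hb_pos c T Hc HT t Ht). fold Ph.
    destruct (Hbn (sR b N R0 x t) (Hs1 R0 x t HR0 Hin)) as [Ba _].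
    set (Wv := W eta q p (sR b N R0 x t)) in *.
    assert (HW : 0 <= Wv) by apply W_ge0.
    assert (Hu1p : 0 <= u1 R0 t) by (unfold u1; apply Rmult_le_pos; [left; apply Rinv_0_lt_compat; auto| apply HPh0]).
    eapply Rle_trans. apply abs_mul_le. exact Ba. rewrite (Rabs_pos_eq (u1 R0 t)) by auto. apply Rle_refl.
    unfold u1. assert (0 <= Wv * (/ R0 * Ph t)) by (apply Rmult_le_pos; auto).
    unfold Rdiv. nra.
  -
    set (K := 4 * (q * (q - 1) * K1 ^ 2 + q * K0 * K2) + 2 * (q * K0 * K1)).
    assert (HK' : 0 <= K).
    { unfold K. assert (0 <= q * (q - 1) * K1 ^ 2) by (apply pos3; [lra|lra|apply pow_le; lra]).
      assert (0 <= q * K0 * K2) by (apply pos3; lra).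
      assert (0 <= q * K0 * K1) by (apply pos3; lra). lra. }
    exists (INR N * K + 1). split.
    { pose proof (pos_INR N). assert (0 <= INR N * K) by (apply Rmult_le_pos; auto). lra. }
    intros R0 HR0 x t Hin. pose proof Hin as [Ht Hr].
    change (rpow (psiRstar b eta p N R0 x t) (1 / p)) with (W eta q p (sR b N R0 x t)).
    destruct (Hbn (sR b N R0 x t) (Hs1 R0 x t HR0 Hin)) as [Ba [Bb Bc]].
    set (Wv := W eta q p (sR b N R0 x t)) in *.
    assert (HW : 0 <= Wv) by apply W_ge0.
    unfold laplacian. eapply Rle_trans. apply sumN_bound with (K := K * Wv * / R0).
    2: { pose proof (pos_INR N). assert (0 <= Wv * / R0) by (apply Rmult_le_pos; auto; left; apply Rinv_0_lt_compat; auto).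
         unfold Rdiv. nra. }
    intros i Hi.
    set (ux := fun h => / R0 * (1 + (normsq N x - x i ^ 2 + h ^ 2) + RInt Ph 0 t)).
    assert (Hfun : forall h, psiR b eta p N R0 (upd x i h) t = G q (etat eta (ux h))).
    { intros h. rewrite Hpsi by auto. rewrite normsq_upd by auto. reflexivity. }
    rewrite (Derive_ext (fun h => Derive (fun h' => psiR b eta p N R0 (upd x i h') t) h)
                        (fun h => Derive (fun h' => G q (etat eta (ux h'))) h)).
    2: { intros h. apply Derive_ext. intros h'. apply Hfun. }
    assert (Hux : forall h, is_derive ux h (/ R0 * (2 * h))).
    { intros h. unfold ux. apply is_derive_scal. eapply isd_eq.
      apply (isd_plus (fun h => 1 + (normsq N x - x i ^ 2 + h ^ 2)) (fun _ => RInt Ph 0 t)).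
      apply (isd_plus (fun _ => 1) (fun h => normsq N x - x i ^ 2 + h ^ 2)). apply isd_const.
      apply (isd_plus (fun _ => normsq N x - x i ^ 2) (fun h => h ^ 2)). apply isd_const. apply isd_sq.
      apply isd_const. ring. }
    assert (Hux1 : forall h, is_derive (fun h => / R0 * (2 * h)) h (/ R0 * 2)).
    { intros h. apply is_derive_scal. eapply isd_eq. apply is_derive_scal. apply isd_id. ring. }
    destruct (chain2 eta Heta_d1 Heta_d2 Heta_one q Hq ux _ _ Hux Hux1 (x i)) as [_ E2].
    rewrite E2.
    assert (Hsx : ux (x i) = sR b N R0 x t).
    { unfold ux, sR. rewrite Hrho by auto. f_equal. ring. }
    rewrite Hsx.
    assert (Hxi : x i ^ 2 <= R0).
    { pose proof (xi_le N x i Hi). pose proof (Hrho1 x t Ht). rewrite Hrho in Hr by auto.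
      pose proof (HI t Ht). lra. }
    replace (K * Wv * / R0) with ((q * (q - 1) * K1 ^ 2 + q * K0 * K2) * Wv * (4 * / R0) + (q * K0 * K1) * Wv * (2 * / R0))
      by (unfold K; ring).
    apply comb3.
    + exact Bc.
    + exact Bb.
    + exact Ba.
    + split. apply pow2_ge_0.
      replace ((/ R0 * (2 * x i)) ^ 2) with (4 * / R0 * (x i ^ 2 * / R0)) by (field; lra).
      assert (x i ^ 2 * / R0 <= 1).
      { replace 1 with (R0 * / R0) by (field; lra). apply Rmult_le_compat_r; auto.
        left; apply Rinv_0_lt_compat; auto. }
      assert (0 < / R0) by (apply Rinv_0_lt_compat; auto).
      assert (0 <= x i ^ 2 * / R0) by (apply Rmult_le_pos; [apply pow2_ge_0|lra]). nra.
    + rewrite Rabs_pos_eq. lra. apply Rmult_le_pos. left; apply Rinv_0_lt_compat; auto. lra.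
  -
    intros _.
    set (AA := Ph 0 ^ 2 + 2 * (M + 1)).
    assert (HAA : 0 <= AA) by (unfold AA; pose proof (pow2_ge_0 (Ph 0)); lra).
    assert (H1 : 0 <= q * (q - 1) * K1 ^ 2 + q * K0 * K2).
    { assert (0 <= q * (q - 1) * K1 ^ 2) by (apply pos3; [lra|lra|apply pow_le; lra]).
      assert (0 <= q * K0 * K2) by (apply pos3; lra). lra. }
    assert (H2 : 0 <= q * K0 * K1) by (apply pos3; lra).
    exists ((q * (q - 1) * K1 ^ 2 + q * K0 * K2) * AA + q * K0 * K1 * (M + 1) + 1). split.
    { assert (0 <= (q * (q - 1) * K1 ^ 2 + q * K0 * K2) * AA) by (apply Rmult_le_pos; auto).
      assert (0 <= q * K0 * K1 * (M + 1)) by (apply Rmult_le_pos; lra). lra. }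
    intros R0 HR0 x t Hin. pose proof Hin as [Ht Hr].
    rewrite HD2 by auto.
    destruct (chain2 eta Heta_d1 Heta_d2 Heta_one q Hq (ut R0 x) (u1 R0) (u2 R0) (Hu R0 x) (Hu1 R0) t) as [_ E2].
    rewrite E2. rewrite (Hs R0 x t HR0 Ht).
    change (rpow (psiRstar b eta p N R0 x t) (1 / p)) with (W eta q p (sR b N R0 x t)).
    destruct (Hbn (sR b N R0 x t) (Hs1 R0 x t HR0 Hin)) as [Ba [Bb Bc]].
    set (Wv := W eta q p (sR b N R0 x t)) in *.
    assert (HW : 0 <= Wv) by apply W_ge0.
    assert (HiR : 0 < / R0) by (apply Rinv_0_lt_compat; auto).
    eapply Rle_trans. apply comb3 with (a := q * (q - 1) * K1 ^ 2) (bb := q * K0 * K2) (g := q * K0 * K1) (W := Wv) (Kx := AA * / R0) (Ky := (M + 1) * / R0).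
    + exact Bc.
    + exact Bb.
    + exact Ba.
    + split. apply pow2_ge_0. unfold u1.
      pose proof (HP2 t Ht). pose proof (HI t Ht). pose proof (normsq_ge0 N x).
      rewrite Hrho in Hr by auto.
      assert (Ph t ^ 2 <= AA * R0).
      { pose proof (pow2_ge_0 (Ph 0)) as Hp0.
        assert (Hq1 : 0 <= Ph 0 ^ 2 * RInt Ph 0 t) by (apply Rmult_le_pos; lra).
        assert (Hq2 : AA * (1 + RInt Ph 0 t) <= AA * R0) by (apply Rmult_le_compat_l; auto; lra).
        unfold AA in Hq2 |- *. nra. }
      replace ((/ R0 * Ph t) ^ 2) with (Ph t ^ 2 * / R0 * / R0) by (field; lra).
      apply Rmult_le_compat_r. lra.
      replace AA with (AA * R0 * / R0) by (field; lra). apply Rmult_le_compat_r; lra.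
    + unfold u2. rewrite Rabs_mult, Rabs_pos_eq by lra. rewrite Rmult_comm.
      apply Rmult_le_compat_r. lra. pose proof (HbM t Ht). pose proof (HPh0 t).
      pose proof (bt_pos b Hb_pos t). assert (0 <= bt b t * Ph t) by (apply Rmult_le_pos; lra).
      apply Rabs_le. lra.
    + unfold Rdiv. nra.
Qed.
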